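(* Let $\mathsf A$ be an MDCS instance and let $\mathsf A'=\mathsf A/E_e$ be obtained by contracting encoder $E_e$, with encoder set $\mathcal E'=\mathcal E\setminus\{E_e\}$. Writing $\mathrm{Proj}'$ for projection onto the coordinates $(H(X_k))_{k\in[[K]]}$ and $(R_i)_{i\in\mathcal E'}$, $$\mathcal R(\mathsf A')=\mathrm{Proj}'\,\mathcal R(\mathsf A),\quad \mathcal R_q(\mathsf A')=\mathrm{Proj}'\,\mathcal R_q(\mathsf A),\quad \mathcal R_{s,q}(\mathsf A')\supseteq\mathrm{Proj}'\,\mathcal R_{s,q}(\mathsf A),\quad \mathcal R_{sp}(\mathsf A')=\mathrm{Proj}'\,\mathcal R_{sp}(\mathsf A).$$
   Context: An MDCS instance $\mathsf{A}=(\mathbf X_{[[K]]},\mathcal E,\mathcal D,\mathbf L,\mathcal G)$ consists of $K$ mutually independent sources $X_1,\dots,X_K$, a finite set $\mathcal E$ of encoders $E_e$ (each has access to all sources and outputs a message $U_e$), a finite set $\mathcal D$ of decoders $D_d$, a level $\mathrm{Lev}(D_d)\in\{1,\dots,K\}$ for each decoder, and an edge set $\mathcal G\subseteq\mathcal E\times\mathcal D$; $\mathrm{Fan}(D_d)=\{E_e:(E_e,D_d)\in\mathcal G\}$, $\mathrm{Fan}(E_e)=\{D_d:(E_e,D_d)\in\mathcal G\}$; $D_d$ must recover $X_1,\dots,X_{\mathrm{Lev}(D_d)}$ from $U_e$, $E_e\in\mathrm{Fan}(D_d)$. Encoder contraction $\mathsf A/E_e$: $\mathcal E'=\mathcal E\setminus\{E_e\}$;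 $\mathcal D'=\mathcal D\setminus\mathrm{Fan}(E_e)$; levels of surviving decoders unchanged; edges restricted to $\mathcal E'\times\mathcal D'$. Rate regions: let $N=K+|\mathcal E|$ with random variables $Y_1,\dots,Y_K,U_e$ ($e\in\mathcal E$); $\mathbf h\in\mathbb R^{2^N-1}$ indexed by nonempty subsets of them; $h_{\mathcal A|\mathcal B}=h_{\mathcal A\cup\mathcal B}-h_{\mathcal B}$. $\mathcal L_1=\{\mathbf h\ge0:h_{Y_1\cdots Y_K}=\sum_kh_{Y_k}\}$, $\mathcal L_2=\{\mathbf h\ge0:h_{U_e|Y_1\cdots Y_K}=0\ \forall e\}$, $\mathcal L_5=\{\mathbf h\ge0:h_{Y_1\cdots Y_{\mathrm{Lev}(D_d)}|(U_e)_{E_e\in\mathrm{Fan}(D_d)}}=0\ \forall d\}$, $\mathcal L_{125}=\mathcal L_1\cap\mathcal L_2\cap\mathcal L_5$, $\mathcal L_4''=\{(\mathbf h,\mathbf R)\in\mathbb R^{2^N-1}_{\ge0}\times\mathbb R^{|\mathcal E|}_{\ge0}:R_e\ge h_{U_e}\ \forall e\}$. All regions live in coordinates $((H(X_k))_k,(R_e)_e)$, where $H(X_k)$ denotes the coordinate $h_{Y_k}$; $\mathrm{Proj}$ is coordinate projection onto these. $\Gamma^*_N$ is the set of entropic vectors, $\overline{\mathrm{con}}$ the closure of the conic hull. $\Gamma_N^q$: conic hull of rank functions $\mathcal A\mapsto\mathrm{rank}(\mathbb A_{:,\mathcal A})$ of matrices $\mathbb A$ over $\mathbb F_q$ with $N$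 columns. $\Gamma^q_{N,\infty}$: conic hull of vectors $\mathcal A\mapsto\dim\sum_{i\in\mathcal A}V_i$ for subspaces $V_1,\dots,V_N$ of a finite-dimensional $\mathbb F_q$-vector space. Then $\mathcal R(\mathsf A)=\mathrm{Proj}(\overline{\mathrm{con}}(\Gamma^*_N\cap\mathcal L_1\cap\mathcal L_2)\cap\mathcal L_5\cap\mathcal L_4'')$ (the rate region: achievable source-entropy/encoder-rate tuples); $\mathcal R_q(\mathsf A)=\mathrm{Proj}(\Gamma^q_{N,\infty}\cap\mathcal L_{125}\cap\mathcal L_4'')$ (achievable by vector $\mathbb F_q$-linear codes); $\mathcal R_{s,q}(\mathsf A)=\mathrm{Proj}(\Gamma^q_N\cap\mathcal L_{125}\cap\mathcal L_4'')$ (achievable by scalar $\mathbb F_q$-linear codes); $\mathcal R_{sp}(\mathsf A)=\mathrm{Proj}_{(R_e),(H(X_k))}\{(R_e,H(X_k),R_e^{X_k})_{e,k}\ge0: R_e=\sum_{i=1}^KR_e^{X_i}\ \forall e;\ \sum_{e:E_e\in\mathrm{Fan}(D_d)}R_e^{X_i}\ge H(X_i)\ \forall d\in\mathcal D,\ i\le\mathrm{Lev}(D_d)\}$ (superposition coding region). *)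

(* Defs.v *)
From HB Require Import structures.
From mathcomp Require Import all_boot all_order all_algebra.
From Stdlib Require Import Reals.
Set Implicit Arguments. Unset Strict Implicit. Unset Printing Implicit Defensive.

(* MDCS instances.  Sources are X_1..X_K, represented 0-indexed by 'I_K;    *)
(* decoder d of level lev d must recover the sources k with k < lev d.      *)
Record mdcs := MDCS {
  K : nat;
  Enc : finType;
  Dec : finType;
  lev : Dec -> nat;
  edge : Enc -> Dec -> bool;
  lev_ok : forall d, (0 < lev d <= K)%N
}.

Definition cEnc (A : mdcs) (e : Enc A) : finType := {x : Enc A | x != e}.
Definition cDec (A : mdcs) (e : Enc A) : finType := {d : Dec A | ~~ edge e d}.
Arguments cEnc : clear implicits.
Arguments cDec : clear implicits.

Definition contract (A : mdcs) (e : Enc A) : mdcs :=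
  @MDCS (K A) (cEnc A e) (cDec A e)
        (fun d => lev (val d))
        (fun x d => edge (val x) (val d))
        (fun d => lev_ok (val d)).
Arguments contract : clear implicits.


(* Random variables Y_1..Y_K, U_e : the finite type V A; vectors h are      *)
(* functions on subsets of V A (h set0 plays no role; it is 0 for all the   *)
(* generating vectors below and hence throughout).                          *)
Definition V (A : mdcs) : finType := ('I_(K A) + Enc A)%type.
Definition vec (A : mdcs) := {set V A} -> R.

Local Open Scope R_scope.

Definition rsum (T : finType) (P : pred T) (F : T -> R) : R :=
  \big[Rplus/0]_(t | P t) F t.

(* Entropy (natural log; the base is irrelevant as all regions are cones)   *)
Definition entropy (T : finType) (P : T -> R) (W : finType) (X : W -> T -> nat)
  (S : {set W}) : R :=
  rsum predT (fun t =>
    P t * - ln (rsum (fun t' => [forall v in S, X v t' == X v t]) P)).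

Definition entropic (A : mdcs) (h : vec A) : Prop :=
  exists (T : finType) (P : T -> R) (X : V A -> T -> nat),
    (forall t, 0 <= P t) /\ rsum predT P = 1 /\
    forall S, h S = entropy P X S.

Definition con (A : mdcs) (S : vec A -> Prop) (h : vec A) : Prop :=
  exists (n : nat) (c : 'I_n -> R) (g : 'I_n -> vec A),
    (forall i, 0 <= c i) /\ (forall i, S (g i)) /\
    forall B, h B = rsum predT (fun i => c i * g i B).

Definition closure (A : mdcs) (S : vec A -> Prop) (h : vec A) : Prop :=
  forall eps, 0 < eps -> exists g, S g /\ forall B, Rabs (h B - g B) < eps.

(* Gamma^q_N : conic hull of rank functions of matrices over F with N columns
   (the column indexed by enum_rank v corresponds to the variable v). *)
Definition colrestr (F : fieldType) (W : finType) (m : nat)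
  (M : 'M[F]_(m, #|W|)) (S : {set W}) : 'M[F]_(m, #|W|) :=
  \matrix_(i, j) (if enum_val j \in S then M i j else GRing.zero).

Definition rank_vec (F : finFieldType) (A : mdcs) (h : vec A) : Prop :=
  exists (m : nat) (M : 'M[F]_(m, #|V A|)),
    forall S, h S = INR (\rank (colrestr M S)).

Definition GammaS (F : finFieldType) (A : mdcs) : vec A -> Prop :=
  con (@rank_vec F A).

(* Gamma^q_{N,infty} : conic hull of dimension functions of subspaces of a
   finite-dimensional F-space F^d (subspaces = row spaces of d x d matrices). *)
Definition subsp_vec (F : finFieldType) (A : mdcs) (h : vec A) : Prop :=
  exists (d : nat) (W : V A -> 'M[F]_d),
    forall S, h S = INR (\rank (\sum_(v in S) W v)%MS).

Definition GammaV (F : finFieldType) (A : mdcs) : vec A -> Prop :=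
  con (@subsp_vec F A).

Definition Ysrc (A : mdcs) : {set V A} := [set inl k | k : 'I_(K A)].
Definition Ylev (A : mdcs) (l : nat) : {set V A} :=
  [set inl k | k : 'I_(K A) & ltn k l].
Definition Ufan (A : mdcs) (d : Dec A) : {set V A} :=
  [set inr x | x : Enc A & edge x d].

Definition nonneg (A : mdcs) (h : vec A) : Prop := forall B, 0 <= h B.

Definition L1 (A : mdcs) (h : vec A) : Prop :=
  nonneg h /\ h (Ysrc A) = rsum predT (fun k : 'I_(K A) => h [set inl k]).
Definition L2 (A : mdcs) (h : vec A) : Prop :=
  nonneg h /\ forall x : Enc A, h (inr x |: Ysrc A) - h (Ysrc A) = 0.
Definition L5 (A : mdcs) (h : vec A) : Prop :=
  nonneg h /\ forall d : Dec A, h (Ylev A (lev d) :|: Ufan d) - h (Ufan d) = 0.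
Definition L125 (A : mdcs) (h : vec A) : Prop := L1 h /\ L2 h /\ L5 h.
Definition L4 (A : mdcs) (h : vec A) (Rt : Enc A -> R) : Prop :=
  nonneg h /\ (forall x, 0 <= Rt x) /\ (forall x, h [set inr x] <= Rt x).

(* A region is a set of points ((H(X_k))_k, (R_e)_e). *)
Definition region (A : mdcs) := ('I_(K A) -> R) -> (Enc A -> R) -> Prop.

Definition proj_region (A : mdcs) (Hset : vec A -> Prop) : region A :=
  fun Hs Rt => exists h, Hset h /\ L4 h Rt /\ forall k, Hs k = h [set inl k].

Definition Rreg (A : mdcs) : region A :=
  proj_region (fun h => closure (con (fun g => entropic g /\ L1 g /\ L2 g)) h
                        /\ L5 h).
Definition Rq (F : finFieldType) (A : mdcs) : region A :=
  proj_region (fun h => GammaV F h /\ L125 h).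
Definition Rsq (F : finFieldType) (A : mdcs) : region A :=
  proj_region (fun h => GammaS F h /\ L125 h).
Definition Rsp (A : mdcs) : region A :=
  fun Hs Rt => exists r : Enc A -> 'I_(K A) -> R,
    (forall x k, 0 <= r x k) /\ (forall k, 0 <= Hs k) /\ (forall x, 0 <= Rt x) /\
    (forall x, Rt x = rsum predT (r x)) /\
    (forall (d : Dec A) (i : 'I_(K A)), ltn i (lev d) ->
        rsum (fun x => edge x d) (fun x => r x i) >= Hs i).

Definition projc (A : mdcs) (e : Enc A) (P : region A) : region (contract A e) :=
  fun Hs Rt' => exists Rt : Enc A -> R,
    P Hs Rt /\ forall x : cEnc A e, Rt (val x) = Rt' x.
Arguments Rreg : clear implicits.
Arguments Rq : clear implicits.
Arguments Rsq : clear implicits.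
Arguments Rsp : clear implicits.
Arguments projc : clear implicits.

(* Main.v *)
Require Import Defs.
From HB Require Import structures.
From mathcomp Require Import all_boot all_order all_algebra.
From Stdlib Require Import Reals Lra.
Set Implicit Arguments. Unset Strict Implicit. Unset Printing Implicit Defensive.
Local Open Scope R_scope.
Lemma Rplus_assoc' : associative Rplus. Proof. move=> x y z; by rewrite Rplus_assoc. Qed.
HB.instance Definition _ := Monoid.isComLaw.Build R 0 Rplus Rplus_assoc' Rplus_comm Rplus_0_l.
Lemma rsum_ge0 (T : finType) (P : pred T) F : (forall t, P t -> 0 <= F t) -> 0 <= rsum P F.
Proof. move=> H; rewrite /rsum; elim/big_ind: _ => //; [lra| move=> x y; lra]. Qed.
Section S.
Variables (A : mdcs) (e : Enc A).
Lemma rsum_split (p : pred (Enc A)) (f : Enc A -> R) :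
  rsum p f = (if p e then f e else 0) + rsum (fun x : cEnc A e => p (val x)) (fun x => f (val x)).
Proof.
rewrite /rsum.
have -> : \big[Rplus/0]_(x | p x) f x = (if p e then f e else 0) + \big[Rplus/0]_(x | p x && (x != e)) f x.
  case: ifP => pe; first by rewrite (bigD1 e) //=.
  rewrite Rplus_0_l; apply: eq_bigl => x; case: eqP => [->|]; by rewrite ?pe ?andbT.
congr (_ + _).
rewrite (reindex_omap (val : cEnc A e -> Enc A) insub); last first.
  by move=> i /andP[_ ie]; rewrite insubT.
apply: eq_bigl=> -[i ie]/=; rewrite insubT /= ie andbT.
case: (p i) => //=; exact/eqP.
Qed.
Lemma inYsrc (B : mdcs) (v : V B) : (v \in Ysrc B) = (if v is inl _ then true else false).
Proof.
case: v => [k|x]; apply/imsetP; first by exists k.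
by case=> k _.
Qed.
Lemma inYlev (B : mdcs) l (v : V B) : (v \in Ylev B l) = (if v is inl k then ltn k l else false).
Proof.
case: v => [k|x]; apply/imsetP => /=; last by case=> k _.
case: ifP => H; first by exists k; rewrite ?inE.
by case=> k' Hk' [Ek]; subst k'; move: Hk'; rewrite inE H.
Qed.
Lemma inUfan (B : mdcs) d (v : V B) : (v \in Ufan d) = (if v is inr x then edge x d else false).
Proof.
case: v => [k|x]; apply/imsetP => /=; first by case=> k' _.
case: ifP => H; first by exists x; rewrite ?inE.
by case=> k' Hk' [Ek]; subst k'; move: Hk'; rewrite inE H.
Qed.

Local Notation A' := (contract A e).
Definition iota (v : V A') : V A := match v with inl k => inl k | inr x => inr (val x) end.
Lemma iota_inj : injective iota.
Proof. by case=> [k|x] [k'|x'] //= [E]; [rewrite E | congr inr; apply: val_inj]. Qed.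
Lemma enc_cases (x : Enc A) : x = e \/ exists x' : cEnc A e, x = val x'.
Proof. case: (eqVneq x e) => [->|H]; [by left | right; by exists (Sub x H)]. Qed.

Lemma V_cases (v : V A) : v = inr e \/ exists v', v = iota v'.
Proof.
case: v => [k|x]; first by right; exists (inl k).
case: (enc_cases x) => [->|[x' ->]]; [by left | by right; exists (inr x')].
Qed.
Definition pi (S : {set V A}) : {set V A'} :=
  [set v | iota v \in S] :|: (if inr e \in S then Ysrc A' else set0).
Definition res (h : vec A) : vec A' := fun S => h (iota @: S).
Definition ext (h : vec A') : vec A := fun S => h (pi S).

Lemma mem_res_inl k (S : {set V A'}) : ((inl k : V A) \in iota @: S) = ((inl k : V A') \in S).
Proof. exact: (mem_imset _ (inl k) iota_inj). Qed.
Lemma mem_res_inr x (S : {set V A'}) : ((inr (val x) : V A) \in iota @: S) = ((inr x : V A') \in S).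
Proof. exact: (mem_imset _ (inr x) iota_inj). Qed.
Lemma mem_res_e (S : {set V A'}) : ((inr e : V A) \in iota @: S) = false.
Proof. by apply/imsetP => -[[k|[x xe]] _ //= [E]]; move: xe; rewrite E eqxx. Qed.
Lemma mem_pi_inl k S : ((inl k : V A') \in pi S) = ((inl k : V A) \in S) || ((inr e : V A) \in S).
Proof. by rewrite /pi !inE; case: ifP => _; rewrite ?inYsrc ?inE ?orbT ?orbF. Qed.
Lemma mem_pi_inr x S : ((inr x : V A') \in pi S) = ((inr (val x) : V A) \in S).
Proof. by rewrite /pi !inE; case: ifP => _; rewrite ?inYsrc ?inE ?orbT ?orbF. Qed.
Lemma eq_inr (B : mdcs) (a b : Enc B) : ((inr a : V B) == inr b) = (a == b).
Proof. by apply/eqP/eqP => [[]|->]. Qed.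
Lemma eq_inl (B : mdcs) (a b : 'I_(K B)) : ((inl a : V B) == inl b) = (a == b).
Proof. by apply/eqP/eqP => [[]|->]. Qed.
Lemma eq_inlr (B : mdcs) a b : ((inl a : V B) == inr b) = false. Proof. by []. Qed.
Lemma eq_inrl (B : mdcs) a b : ((inr a : V B) == inl b) = false. Proof. by []. Qed.
Lemma valNe (x : cEnc A e) : (val x == e) = false.
Proof. by case: x => x /= /negPf. Qed.
Lemma eNval (x : cEnc A e) : (e == val x) = false.
Proof. by rewrite eq_sym valNe. Qed.
Lemma val_eq' (x y : cEnc A e) : (val x == val y) = (x == y).
Proof. by []. Qed.
Ltac vcase := apply/setP; case;
  [ intro | let xx := fresh "xx" in intro xx; case: (enc_cases xx) => [->|[? ->]]].
Ltac vcase' := apply/setP => -[?|?].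
Ltac mems := rewrite ?mem_res_inl ?mem_res_inr ?mem_res_e ?mem_pi_inl ?mem_pi_inr
   ?inE ?eq_inr ?eq_inl ?eq_inlr ?eq_inrl ?valNe ?eNval ?val_eq' ?inYsrc ?inYlev ?inUfan /= ?orbF ?orbT ?andbF ?andbT ?eqxx.

Lemma res_Ysrc : iota @: Ysrc A' = Ysrc A.
Proof. vcase; by mems. Qed.
Lemma res_L2 x : iota @: ((inr x : V A') |: Ysrc A') = inr (val x) |: Ysrc A.
Proof. vcase; by mems. Qed.
Lemma res_L5 l (d : cDec A e) : iota @: (Ylev A' l :|: Ufan (d : Dec A')) = Ylev A l :|: Ufan (val d).
Proof. vcase; mems => //. case: d => d /= /negPf ->. done. Qed.
Lemma res_Ufan (d : cDec A e) : iota @: (Ufan (d : Dec A')) = Ufan (val d).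
Proof. vcase; mems => //. case: d => d /= /negPf ->. done. Qed.
Lemma pi_Ysrc : pi (Ysrc A) = Ysrc A'.
Proof. vcase'; by mems. Qed.
Lemma pi_set1 v : pi [set iota v] = [set v].
Proof. case: v => ?; vcase'; by mems. Qed.

Lemma pi_L2 x : pi (inr (val x) |: Ysrc A) = (inr x : V A') |: Ysrc A'.
Proof. vcase'; by mems. Qed.
Lemma pi_L2e : pi (inr e |: Ysrc A) = Ysrc A'.
Proof. vcase'; by mems. Qed.
Lemma pi_set1e : pi [set (inr e : V A)] = Ysrc A'.
Proof. vcase'; by mems. Qed.
Lemma pi_L5 l d (H : ~~ edge e d) :
  pi (Ylev A l :|: Ufan d) = Ylev A' l :|: Ufan (exist (fun d => ~~ edge e d) d H : Dec A').
Proof. vcase'; mems => //; by rewrite (negPf H) ?orbF. Qed.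
Lemma pi_Ufan d (H : ~~ edge e d) :
  pi (Ufan d) = Ufan (exist (fun d => ~~ edge e d) d H : Dec A').
Proof. vcase'; mems => //; by rewrite (negPf H). Qed.
Lemma pi_L5e l d (H : edge e d) :
  pi (Ylev A l :|: Ufan d) = pi (Ufan d).
Proof. vcase'; mems => //; by rewrite H ?orbT. Qed.
Definition extR (T : Type) (f : cEnc A e -> T) (a : T) (x : Enc A) : T :=
  match insub x with Some x' => f x' | None => a end.
Lemma extR_val T f (a : T) x : extR f a (val x) = f x.
Proof. by rewrite /extR valK. Qed.
Lemma extR_sval T f (a : T) x : extR f a (sval x) = f x.
Proof. exact: extR_val. Qed.
Lemma extR_e T f (a : T) : extR f a e = a.
Proof. by rewrite /extR insubF // eqxx. Qed.

Lemma nonneg_res h : Defs.nonneg h -> Defs.nonneg (res h).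
Proof. by move=> H S; apply: H. Qed.
Lemma nonneg_ext h : Defs.nonneg h -> Defs.nonneg (ext h).
Proof. by move=> H S; apply: H. Qed.
Lemma L1_res h : L1 h -> L1 (res h).
Proof.
case=> Hn H; split; first exact: nonneg_res.
rewrite /res res_Ysrc H /rsum; apply: eq_bigr => k _; by rewrite imset_set1.
Qed.
Lemma L2_res h : L2 h -> L2 (res h).
Proof. case=> Hn H; split; first exact: nonneg_res. by move=> x; rewrite /res res_L2 res_Ysrc. Qed.
Lemma L5_res h : L5 h -> L5 (res h).
Proof. case=> Hn H; split; first exact: nonneg_res. move=> d; have := H (val d). by rewrite -res_L5 -res_Ufan. Qed.
Lemma L4_res h Rt : L4 h Rt -> L4 (res h) (fun x => Rt (val x)).
Proof.
case=> Hn [H1 H2]; split; first exact: nonneg_res.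
split=> // x; rewrite /res imset_set1; exact: H2.
Qed.
Lemma L1_ext h : L1 h -> L1 (ext h).
Proof.
case=> Hn H; split; first exact: nonneg_ext.
rewrite /ext pi_Ysrc H /rsum; apply: eq_bigr => k _; by rewrite (pi_set1 (inl k)).
Qed.
Lemma L2_ext h : L2 h -> L2 (ext h).
Proof.
case=> Hn H; split; first exact: nonneg_ext.
move=> x; case: (enc_cases x) => [->|[x' ->]]; rewrite /ext.
  rewrite pi_L2e pi_Ysrc; lra.
by rewrite pi_L2 pi_Ysrc.
Qed.
Lemma L5_ext h : L5 h -> L5 (ext h).
Proof.
case=> Hn H; split; first exact: nonneg_ext.
move=> d; rewrite /ext; case: (boolP (edge e d)) => Hd.
  rewrite (pi_L5e _ Hd); lra.
rewrite (pi_L5 _ Hd) (pi_Ufan Hd); exact: (H (exist _ d Hd)).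
Qed.
Lemma L4_ext h Rt : L4 h Rt -> L4 (ext h) (extR Rt (h (Ysrc A'))).
Proof.
case=> Hn [H1 H2]; split; first exact: nonneg_ext.
split=> x; case: (enc_cases x) => [->|[x' ->]]; rewrite ?extR_e ?extR_val.
- by apply: Hn.
- by apply: H1.
- rewrite /ext pi_set1e; lra.
- rewrite /ext (pi_set1 (inr x')); exact: H2.
Qed.
Lemma L125_res h : L125 h -> L125 (res h).
Proof. by case=> [? [? ?]]; split; [apply: L1_res | split; [apply: L2_res | apply: L5_res]]. Qed.
Lemma L125_ext h : L125 h -> L125 (ext h).
Proof. by case=> [? [? ?]]; split; [apply: L1_ext | split; [apply: L2_ext | apply: L5_ext]]. Qed.
Lemma con_pull (B C : mdcs) (sg : {set V C} -> {set V B}) (P : vec B -> Prop) (Q : vec C -> Prop) h :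
  (forall g, P g -> Q (fun S => g (sg S))) -> con P h -> con Q (fun S => h (sg S)).
Proof.
move=> HPQ [n [c [g [Hc [Hg Hh]]]]].
exists n, c, (fun i S => g i (sg S)); split=> //; split=> [i|S]; [exact: HPQ | exact: Hh].
Qed.
Lemma closure_pull (B C : mdcs) (sg : {set V C} -> {set V B}) (P : vec B -> Prop) (Q : vec C -> Prop) h :
  (forall g, P g -> Q (fun S => g (sg S))) -> Defs.closure P h -> Defs.closure Q (fun S => h (sg S)).
Proof.
move=> HPQ H eps Heps; have [g [Pg Hg]] := H eps Heps.
by exists (fun S => g (sg S)); split; [exact: HPQ | move=> S; exact: Hg].
Qed.
Lemma entropy_congr (T : finType) (P : T -> R) (W1 W2 : finType) (X1 : W1 -> T -> nat)
  (X2 : W2 -> T -> nat) (S1 : {set W1}) (S2 : {set W2}) :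
  (forall t t', [forall v in S1, X1 v t' == X1 v t] = [forall v in S2, X2 v t' == X2 v t]) ->
  entropy P X1 S1 = entropy P X2 S2.
Proof.
move=> H; rewrite /entropy /rsum; apply: eq_bigr => t _.
do 3 f_equal; apply: eq_bigl => t'; exact: H.
Qed.
Lemma entropic_res h : entropic h -> entropic (res h).
Proof.
move=> [T [P [X [HP [H1 HX]]]]].
exists T, P, (fun v => X (iota v)); split=> //; split=> // S.
rewrite /res HX; apply: entropy_congr => t t'.
apply/forallP/forallP => H v; apply/implyP => Hv.
  by have := H (iota v); rewrite imset_f.
by case/imsetP: Hv => v' Hv' ->; have := H v'; rewrite Hv'.
Qed.
Lemma entropic_ext h : entropic h -> entropic (ext h).
Proof.
move=> [T [P [X [HP [H1 HX]]]]].
pose src t : {ffun 'I_(K A) -> nat} := [ffun k => X (inl k) t].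
pose enc t := index (src t) (map src (enum T)).
have enc_eq t t' : (enc t' == enc t) = (src t' == src t).
  apply/eqP/eqP => E; last by rewrite /enc E.
  have := congr1 (nth (src t) (map src (enum T))) E.
  by rewrite !nth_index // map_f // mem_enum.
pose Y (v : V A) t := match v with inl k => X (inl k) t
                        | inr x => extR (fun x' => X (inr x') t) (enc t) x end.
exists T, P, Y; split=> //; split=> // S.
rewrite /ext HX; apply: entropy_congr => t t'.
apply/forallP/forallP => H.
- case=> [k|x]; apply/implyP => Hv.
    by have := H (inl k); rewrite mem_pi_inl Hv.
  case: (enc_cases x) Hv => [->|[x' ->]] Hv /=; rewrite ?extR_e ?extR_val.
    rewrite enc_eq; apply/eqP/ffunP => k; rewrite !ffunE.
    by have := H (inl k); rewrite mem_pi_inl Hv orbT => /eqP.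
  by have := H (inr x'); rewrite mem_pi_inr Hv.
- case=> [k|x']; apply/implyP; rewrite ?mem_pi_inl ?mem_pi_inr.
    case/orP => Hv; first by have := H (inl k); rewrite Hv.
    have := H (inr e); rewrite Hv /= !extR_e enc_eq => /eqP /ffunP /(_ k).
    by rewrite /src !ffunE => ->.
  by move=> Hv; have := H (inr (val x')); rewrite Hv /= !extR_sval.
Qed.
Lemma subsp_res (F : finFieldType) h : subsp_vec F h -> subsp_vec F (res h).
Proof.
move=> [d [W HW]]; exists d, (fun v => W (iota v)) => S.
rewrite /res HW big_imset //; move=> x y _ _; exact: iota_inj.
Qed.
Lemma subsp_ext (F : finFieldType) h : subsp_vec F h -> subsp_vec F (ext h).
Proof.
move=> [d [W HW]].
exists d, (fun v => match v with inl k => W (inl k)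
   | inr x => extR (fun x' => W (inr x')) (\sum_(k : 'I_(K A)) W (inl k))%MS x end) => S.
rewrite /ext HW; f_equal; apply: eqmx_rank; apply/andP; split.
- apply/sumsmx_subP => -[k|x']; rewrite ?mem_pi_inl ?mem_pi_inr.
    case/orP => Hv; first by apply: (sumsmx_sup (inl k)).
    apply: (sumsmx_sup (inr e)) => //; rewrite extR_e; exact: (sumsmx_sup k).
  by move=> Hv; apply: (sumsmx_sup (inr (val x'))) => //; rewrite extR_val.
- apply/sumsmx_subP => -[k|x] Hv.
    by apply: (sumsmx_sup (inl k)); rewrite ?mem_pi_inl ?Hv.
  case: (enc_cases x) Hv => [->|[x' ->]] Hv; rewrite ?extR_e ?extR_val.
    apply/sumsmx_subP => k _; apply: (sumsmx_sup (inl k)) => //.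
    by rewrite mem_pi_inl Hv orbT.
  by apply: (sumsmx_sup (inr x')) => //; rewrite mem_pi_inr.
Qed.
Section Rank.
Local Open Scope ring_scope.
Import GRing.Theory.
Variable F : finFieldType.
Definition fcol (j : 'I_#|V A'|) : 'I_#|V A| := enum_rank (iota (enum_val j)).
Lemma fcol_inj : injective fcol.
Proof. by move=> j j' /enum_rank_inj /iota_inj /enum_val_inj. Qed.
Lemma rank_res h : rank_vec F h -> rank_vec F (res h).
Proof.
move=> [m [M HM]].
exists m, (\matrix_(i, j) M i (fcol j)) => S.
rewrite /res HM; f_equal; apply/eqP; rewrite eqn_leq; apply/andP; split.
- set Y := colrestr _ S.
  have -> : colrestr M (iota @: S) = Y *m \matrix_(j', j) (fcol j' == j)%:R.
    apply/matrixP => i j; rewrite !mxE.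
    have Ej : j = enum_rank (enum_val j) by rewrite enum_valK.
    case: (V_cases (enum_val j)) => [Hv|[v' Hv]].
      rewrite Hv mem_res_e big1 // => j0 _; rewrite !mxE.
      case: eqP => E /=; last exact: mulr0.
      move: Hv; rewrite -E /fcol enum_rankK; case: (enum_val j0) => [k|x'] //= [E']; by case: x' E' => x0 /= xe E0; exfalso; by move: xe; rewrite E0 eqxx.
    rewrite Hv (mem_imset _ _ iota_inj) (bigD1 (enum_rank v')) //= big1.
      rewrite !mxE enum_rankK addr0.
      have -> : fcol (enum_rank v') = j by rewrite /fcol enum_rankK -Hv enum_valK.
      by rewrite eqxx mulr1.
    move=> j0 Hj0; rewrite !mxE.
    case: eqP => E /=; last exact: mulr0; case/eqP: Hj0.
    by apply: fcol_inj; rewrite E /fcol enum_rankK -Hv enum_valK.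
  by apply: mxrankM_maxl.
- set X := colrestr M _.
  have -> : colrestr (\matrix_(i, j) M i (fcol j)) S = X *m colsub fcol 1%:M.
    rewrite mulmx_colsub mulmx1; apply/matrixP => i j; rewrite !mxE enum_rankK.
    by rewrite (mem_imset _ _ iota_inj).
  by apply: mxrankM_maxl.
Qed.
End Rank.
Lemma rsum_eq (T : finType) (P : pred T) f g : (forall x, P x -> f x = g x) -> rsum P f = rsum P g.
Proof. by move=> H; rewrite /rsum; apply: eq_bigr. Qed.
Lemma L4_eq (B : mdcs) (h : vec B) R1 R2 : (forall x, R1 x = R2 x) -> L4 h R1 -> L4 h R2.
Proof. by move=> E [? [H1 H2]]; split=> //; split=> x; rewrite -E. Qed.

Lemma Rsp_to Hs Rt' : Rsp A' Hs Rt' -> projc A e (Rsp A) Hs Rt'.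
Proof.
move=> [r' [Hr [HH [HR [HRs Hd]]]]].
exists (extR Rt' (rsum predT Hs)); split; last by move=> x; rewrite extR_val.
exists (extR r' Hs); split; [|split=> //; split; [|split]].
- move=> x k; case: (enc_cases x) => [->|[x' ->]]; rewrite ?extR_e ?extR_val //.
- move=> x; case: (enc_cases x) => [->|[x' ->]]; rewrite ?extR_e ?extR_val //.
  by apply: rsum_ge0.
- move=> x; case: (enc_cases x) => [->|[x' ->]]; rewrite ?extR_e ?extR_val //.
- move=> d i Hi; rewrite rsum_split.
  rewrite (@rsum_eq _ _ _ (fun x => r' x i)); last by move=> x _; rewrite extR_val.
  case: (boolP (edge e d)) => Hed.
    rewrite extR_e; apply: Rle_ge; rewrite -{1}[Hs i]Rplus_0_r; apply: Rplus_le_compat_l.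
    by apply: rsum_ge0 => x _; exact: Hr.
  have := Hd (exist _ d Hed) i Hi; rewrite /=; lra.
Qed.
Lemma Rsp_from Hs Rt' : projc A e (Rsp A) Hs Rt' -> Rsp A' Hs Rt'.
Proof.
move=> [Rt [[r [Hr [HH [HR [HRs Hd]]]]] HRt]].
exists (fun x => r (val x)); split=> //; split=> //; split; [|split].
- by move=> x; rewrite -HRt.
- by move=> x; rewrite -HRt.
- move=> [d Hed] i Hi; have := Hd d i Hi; rewrite rsum_split (negPf Hed) /=; lra.
Qed.
End S.

Unset Implicit Arguments.
Theorem theorem5 (A : mdcs) (e : Enc A) :
  (forall Hs Rt, Rreg (contract A e) Hs Rt <-> projc A e (Rreg A) Hs Rt) /\
  (forall (F : finFieldType) Hs Rt,
      Rq F (contract A e) Hs Rt <-> projc A e (Rq F A) Hs Rt) /\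
  (forall (F : finFieldType) Hs Rt,
      projc A e (Rsq F A) Hs Rt -> Rsq F (contract A e) Hs Rt) /\
  (forall Hs Rt, Rsp (contract A e) Hs Rt <-> projc A e (Rsp A) Hs Rt).
Proof.
split; [|split; [|split]].
- move=> Hs Rt'; split.
  + move=> [h [[Hcl H5] [H4 Hk]]].
    exists (extR Rt' (h (Ysrc (contract A e)))); split; last by move=> x; rewrite extR_val.
    exists (ext h); split; [split|split].
    * apply: (closure_pull (sg := @pi A e)) Hcl => g; apply: con_pull => g' [? [? ?]].
      split; [exact: entropic_ext | split; [exact: L1_ext | exact: L2_ext]].
    * exact: L5_ext.
    * exact: L4_ext.
    * by move=> k; rewrite Hk /ext (pi_set1 (inl k)).
  + move=> [Rt [[h [[Hcl H5] [H4 Hk]]] HRt]].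
    exists (@res A e h); split; [split|split].
    * apply: (closure_pull (sg := imset (@iota A e) \o mem)) Hcl => g; apply: con_pull => g' [? [? ?]].
      split; [exact: entropic_res | split; [exact: L1_res | exact: L2_res]].
    * exact: L5_res.
    * exact: (@L4_eq (contract A e) (@res A e h) (fun x => Rt (val x)) Rt' HRt (@L4_res A e h Rt H4)).
    * by move=> k; rewrite Hk /res imset_set1.
- move=> F Hs Rt'; split.
  + move=> [h [[Hcl H5] [H4 Hk]]].
    exists (extR Rt' (h (Ysrc (contract A e)))); split; last by move=> x; rewrite extR_val.
    exists (ext h); split; [split|split].
    * apply: (con_pull (sg := @pi A e)) Hcl => g; exact: subsp_ext.
    * exact: L125_ext.
    * exact: L4_ext.
    * by move=> k; rewrite Hk /ext (pi_set1 (inl k)).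
  + move=> [Rt [[h [[Hcl H5] [H4 Hk]]] HRt]].
    exists (@res A e h); split; [split|split].
    * apply: (con_pull (sg := imset (@iota A e) \o mem)) Hcl => g; exact: subsp_res.
    * exact: L125_res.
    * exact: (@L4_eq (contract A e) (@res A e h) (fun x => Rt (val x)) Rt' HRt (@L4_res A e h Rt H4)).
    * by move=> k; rewrite Hk /res imset_set1.
- move=> F Hs Rt' [Rt [[h [[Hcl H5] [H4 Hk]]] HRt]].
  exists (@res A e h); split; [split|split].
  * apply: (con_pull (sg := imset (@iota A e) \o mem)) Hcl => g; exact: rank_res.
  * exact: L125_res.
  * exact: (@L4_eq (contract A e) (@res A e h) (fun x => Rt (val x)) Rt' HRt (@L4_res A e h Rt H4)).
  * by move=> k; rewrite Hk /res imset_set1.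
- by move=> Hs Rt; split; [apply: Rsp_to | apply: Rsp_from].
Qed.
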